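(* Let $a,\Theta$ be finitely supported complex sequences on $\mathbb Z$ with $\Theta^\star=\Theta$, and let $b_1,b_2$ be finitely supported complex sequences such that $\{a;b_1,b_2\}_{\Theta,(1,-1)}$ is a quasi-tight framelet filter bank and $$\mathrm{S}\Theta(z)=1,\quad \mathrm{S}a(z)=\epsilon z^c,\quad \mathrm{S}b_1(z)=\epsilon_1z^{c_1},\quad \mathrm{S}b_2(z)=\epsilon_2z^{c_2}$$ for some $\epsilon,\epsilon_1,\epsilon_2\in\{\pm1\}$ and $c,c_1,c_2\in\mathbb Z$. Then $c_1+c$ and $c_2+c$ are even.
   Context: Finitely supported sequences $u$ on $\mathbb Z$ are identified with Laurent polynomials $u(z)=\sum_ku(k)z^k$; $u^\star(z):=\sum_k\overline{u(k)}z^{-k}$. $u$ has symmetry of type $\epsilon z^c$ if $u(z)=\epsilon z^cu(z^{-1})$; for nonzero $u$, $\mathrm{S}u(z):=u(z)/u(z^{-1})$; zero has every type. $\{a;b_1,b_2\}_{\Theta,(1,-1)}$ is a quasi-tight framelet filter bank if for all $z\in\mathbb C\setminus\{0\}$: $\Theta(z^2)a^\star(z)a(z)+b_1^\star(z)b_1(z)-b_2^\star(z)b_2(z)=\Theta(z)$ and $\Theta(z^2)a^\star(z)a(-z)+b_1^\star(z)b_1(-z)-b_2^\star(z)b_2(-z)=0$. *)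

(* Defs.v *)
From mathcomp Require Import all_boot all_algebra.
From mathcomp Require Export reals complex.
Set Implicit Arguments. Unset Strict Implicit. Unset Printing Implicit Defensive.
Import GRing.Theory Num.Theory.
Local Open Scope ring_scope.

Definition lseq (C : Type) := int -> C.

Definition supp_in (C : numClosedFieldType) (N : nat) (u : lseq C) : Prop :=
  forall k : int, (N%:Z < `|k|)%R -> u k = 0.

Definition lnonzero (C : numClosedFieldType) (u : lseq C) : Prop :=
  exists k : int, u k != 0.

(* Laurent polynomial u(z) = sum_{k=-N}^{N} u(k) z^k  (valid when supp_in N u) *)
Definition lpeval (C : numClosedFieldType) (N : nat) (u : lseq C) (z : C) : C :=
  \sum_(i < (N + N).+1) u (i%:Z - N%:Z) * z ^ (i%:Z - N%:Z).

(* u^star(k) := conj(u(-k)), so u^star(z) = sum_k conj(u(k)) z^{-k} *)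
Definition lstar (C : numClosedFieldType) (u : lseq C) : lseq C :=
  fun k => (u (- k))^*.

Definition has_symtype (C : numClosedFieldType) (N : nat) (u : lseq C)
  (eps : C) (c : int) : Prop :=
  forall z : C, z != 0 -> lpeval N u z = eps * z ^ c * lpeval N u z^-1.

Definition qtffb (C : numClosedFieldType) (N : nat) (Theta a b1 b2 : lseq C) : Prop :=
  forall z : C, z != 0 ->
    lpeval N Theta (z ^+ 2) * lpeval N (lstar a) z * lpeval N a z
      + lpeval N (lstar b1) z * lpeval N b1 z
      - lpeval N (lstar b2) z * lpeval N b2 z = lpeval N Theta z
    /\
    lpeval N Theta (z ^+ 2) * lpeval N (lstar a) z * lpeval N a (- z)
      + lpeval N (lstar b1) z * lpeval N b1 (- z)
      - lpeval N (lstar b2) z * lpeval N b2 (- z) = 0.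

(* Main.v *)
Require Import Defs.
Set Implicit Arguments. Unset Strict Implicit.
From mathcomp Require Import all_boot all_algebra.
From mathcomp Require Import reals complex.
From mathcomp Require Import all_order ring zify.
Import Order.TTheory GRing.Theory Num.Theory.
Local Open Scope ring_scope.

Section Aux.
Variable C : numClosedFieldType.
Implicit Types (N : nat) (u : lseq C) (z e : C) (c : int).

Definition Pl (N : nat) (u : lseq C) : {poly C} :=
  \poly_(i < (N + N).+1) u (i%:Z - N%:Z).

Lemma lpevalE N (u : lseq C) z : z != 0 -> lpeval N u z = (Pl N u).[z] * z ^- N.
Proof.
move=> nz; rewrite /lpeval /Pl horner_poly big_distrl; apply: eq_bigr => i _.
rewrite exprzDr ?unitfE // exprnN mulrA; congr (_ * _ * _).
Qed.
Lemma dummy1 : True. Proof. by [].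
Qed.

Lemma Pl_neq0 N (u : lseq C) : supp_in N u -> lnonzero u -> Pl N u != 0.
Proof.
move=> hs [k hk]; have hkN : (`|k| <= N%:Z)%R.
  by rewrite leNgt; apply/negP => /hs; apply/eqP.
have k0 : (0 <= k + N%:Z)%R by move: hkN; case: (ler0P k) => h; lia.
pose j := absz (k + N%:Z).
have hj : j%:Z = k + N%:Z by rewrite /j gez0_abs.
apply/negP => /eqP H; have := congr1 (fun p : {poly C} => p`_j) H.
rewrite coef_poly coef0 ifT; last by move: hkN; case: (ler0P k) => h; lia.
by rewrite hj addrK; apply/eqP.
Qed.

Definition good (f : C -> C) := exists p : {poly C}, p != 0 /\
  forall z, z != 0 -> f z = 0 -> p.[z] = 0.

Lemma good_lp N u : supp_in N u -> lnonzero u -> good (lpeval N u).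
Proof.
move=> hs hn; exists (Pl N u); split; first exact: Pl_neq0.
move=> z nz; rewrite lpevalE // => /eqP; rewrite mulf_eq0 invr_eq0 expf_eq0 (negbTE nz) andbF orbF.
by move/eqP.
Qed.

Lemma good_mul f g : good f -> good g -> good (fun z => f z * g z).
Proof.
move=> [p [p0 hp]] [q [q0 hq]]; exists (p * q); split; first by rewrite mulf_neq0.
move=> z nz /eqP; rewrite mulf_eq0 hornerM => /orP[] /eqP h.
  by rewrite hp // mul0r.
by rewrite hq // mulr0.
Qed.

Lemma good_neg f : good f -> good (fun z => f (- z)).
Proof.
move=> [p [p0 hp]]; exists (p \Po (- 'X)); split.
  by rewrite comp_poly2_eq0 // size_polyN size_polyX.
move=> z nz h; by rewrite horner_comp hornerN hornerX hp // oppr_eq0.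
Qed.

Lemma good_sq f : good f -> good (fun z => f (z ^+ 2)).
Proof.
move=> [p [p0 hp]]; exists (p \Po 'X^2); split.
  by rewrite comp_poly_eq0 // size_polyXn.
move=> z nz h; by rewrite horner_comp hornerXn hp // expf_neq0.
Qed.

Lemma good_ex f : good f -> ~ (forall z, z != 0 -> f z = 0).
Proof.
move=> [p [p0 hp]] H; move/eqP: p0; apply.
apply: (@roots_geq_poly_eq0 _ p [seq (i.+1)%:R | i <- iota 0 (size p)]).
- apply/allP => x /mapP [i _ ->]; apply/eqP; apply: hp.
    by rewrite pnatr_eq0.
  by apply: H; rewrite pnatr_eq0.
- rewrite map_inj_uniq ?iota_uniq // => i j /eqP; rewrite eqr_nat eqSS.
  by move/eqP.
- by rewrite size_map size_iota.
Qed.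
Lemma conjXz (x : C) n : x != 0 -> (x ^ n)^* = (x^*) ^ n.
Proof. by move=> nx; rewrite rmorphXz // unitfE. Qed.

Lemma conjVK (z : C) : ((z^*)^-1)^* = z^-1.
Proof. by rewrite fmorphV /= conjCK. Qed.

Lemma lpeval_star N (u : lseq C) z : z != 0 ->
  lpeval N (lstar u) z = (lpeval N u (z^*)^-1)^*.
Proof.
move=> nz; rewrite /lpeval rmorph_sum /= (reindex_inj rev_ord_inj) /=.
apply: eq_bigr => i _.
rewrite /lstar rmorphM /= conjXz ?invr_eq0 ?conjC_eq0 // conjVK.
have e : ((N+N).+1 - i.+1)%N%:Z - N%:Z = -(i%:Z - N%:Z) by have := ltn_ord i; lia.
by rewrite e opprK exprz_inv.
Qed.

Lemma sym_star N (u : lseq C) e c z : has_symtype N u e c -> e^* = e -> z != 0 ->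
  lpeval N (lstar u) z^-1 = e * z ^ c * lpeval N (lstar u) z.
Proof.
move=> hs he nz.
rewrite lpeval_star ?invr_eq0 // fmorphV invrK hs ?conjC_eq0 //.
rewrite !rmorphM /= he conjXz ?conjC_eq0 // conjCK -lpeval_star //.
Qed.

Lemma sym_neg N (u : lseq C) e c z : has_symtype N u e c -> z != 0 ->
  lpeval N u (- z^-1) = e * ((- z)^-1) ^ c * lpeval N u (- z).
Proof.
move=> hs nz; rewrite -invrN hs ?invr_eq0 ?oppr_eq0 // invrK //.
Qed.

Lemma Tsym N (u : lseq C) e c z : has_symtype N u e c -> (e = 1 \/ e = -1) -> z != 0 ->
  lpeval N (lstar u) z^-1 * lpeval N u (- z^-1)
  = (-1) ^ c * (lpeval N (lstar u) z * lpeval N u (- z)).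
Proof.
move=> hs he nz.
have hc : e^* = e by case: he => ->; rewrite ?rmorphN rmorph1.
have e2 : e * e = 1 by case: he => ->; rewrite ?mulrNN mulr1.
have m1 : (-1 : C) = z * (- z)^-1 by rewrite invrN mulrN divff.
rewrite (sym_star hs hc nz) (sym_neg hs nz) m1 exprzMl ?unitfE ?invr_eq0 ?oppr_eq0 //.
transitivity ((e * e) * (z ^ c * (- z)^-1 ^ c) * (lpeval N (lstar u) z * lpeval N u (- z))).
  ring.
by rewrite e2 mul1r.
Qed.

Lemma theta_sym N (Th : lseq C) z : has_symtype N Th 1 0 -> z != 0 ->
  lpeval N Th (z^-1 ^+ 2) = lpeval N Th (z ^+ 2).
Proof.
move=> hs nz; by rewrite (hs (z ^+ 2)) ?expf_neq0 // expr0z !mul1r exprVn.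
Qed.

Definition sg (c : int) : C := (-1) ^ c.

Lemma sgD m n : sg (m + n) = sg m * sg n.
Proof. by rewrite /sg exprzDr // unitfE oppr_eq0 oner_eq0. Qed.

Lemma sg_split m : sg m = sg (m %% 2)%Z.
Proof.
rewrite {1}(divz_eq m 2) sgD; suff -> : sg ((m %/ 2)%Z * 2) = 1 by rewrite mul1r.
have h2 : (-1 : C) ^ (2:int) = 1 by rewrite -exprnP expr2 mulrNN mulr1.
by rewrite /sg mulrC -exprz_exp h2 exp1rz.
Qed.

Lemma sg_pm m : sg m = 1 \/ sg m = -1.
Proof.
rewrite sg_split; have h0 := modz_ge0 m (isT : (2 != 0 :> int)).
have h1 := ltz_pmod m (isT : (0 < 2 :> int)).
have [->|->] : (m %% 2)%Z = 0 \/ (m %% 2)%Z = 1 by lia.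
  by left.
by right.
Qed.

Lemma sg1 m : sg m = 1 -> (2 %| m)%Z.
Proof.
rewrite sg_split; have h0 := modz_ge0 m (isT : (2 != 0 :> int)).
have h1 := ltz_pmod m (isT : (0 < 2 :> int)).
move=> H; apply/dvdz_mod0P.
have [//|e] : (m %% 2)%Z = 0 \/ (m %% 2)%Z = 1 by lia.
move: H; rewrite e /sg expr1z => /eqP; rewrite -subr_eq0 -opprD oppr_eq0.
by rewrite -(natrD C 1 1) pnatr_eq0.
Qed.

Lemma two0 (x : C) : x + x = 0 -> x = 0.
Proof. by move=> h; apply/eqP; move: (mulrn_eq0 x 2); rewrite mulr2n h eqxx /= => <-. Qed.

Lemma lstar_supp N (u : lseq C) : supp_in N u -> supp_in N (lstar u).
Proof. by move=> hs k hk; rewrite /lstar hs ?abszN ?normrN // conjC0. Qed.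

Lemma lstar_nz (u : lseq C) : lnonzero u -> lnonzero (lstar u).
Proof. by move=> [k hk]; exists (- k); rewrite /lstar opprK conjC_eq0. Qed.

Lemma good_T N (u : lseq C) : supp_in N u -> lnonzero u ->
  good (fun z => lpeval N (lstar u) z * lpeval N u (- z)).
Proof.
move=> hs hn; apply: good_mul; first exact/good_lp/lstar_nz/hn/lstar_supp.
exact/(good_neg (f := lpeval N u))/good_lp.
Qed.
Lemma elimX (t u y w sa s1 s2 : C) : sa * sa = 1 -> sa * s1 = -1 -> sa * s2 = -1 ->
  t * u + y - w = 0 -> t * (sa * u) + s1 * y - s2 * w = 0 -> t * u = 0.
Proof.
move=> e0 e1 e2 h1 h2; apply: two0.
have -> : t * u + t * u = (t * u + y - w) + sa * (t * (sa * u) + s1 * y - s2 * w).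
  have -> : sa * (t * (sa * u) + s1 * y - s2 * w) = t * u * (sa * sa) + y * (sa * s1) - w * (sa * s2) by ring.
  by rewrite e0 e1 e2; ring.
by rewrite h1 h2; ring.
Qed.

Lemma elimY (t u y w sa s1 s2 : C) : sa * sa = 1 -> sa * s1 = -1 -> sa * s2 = 1 ->
  t * u + y - w = 0 -> t * (sa * u) + s1 * y - s2 * w = 0 -> y = 0.
Proof.
move=> e0 e1 e2 h1 h2; apply: two0.
have -> : y + y = (t * u + y - w) - sa * (t * (sa * u) + s1 * y - s2 * w).
  have -> : sa * (t * (sa * u) + s1 * y - s2 * w) = t * u * (sa * sa) + y * (sa * s1) - w * (sa * s2) by ring.
  by rewrite e0 e1 e2; ring.
by rewrite h1 h2; ring.
Qed.

Lemma elimW (t u y w sa s1 s2 : C) : sa * sa = 1 -> sa * s1 = 1 -> sa * s2 = -1 ->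
  t * u + y - w = 0 -> t * (sa * u) + s1 * y - s2 * w = 0 -> w = 0.
Proof.
move=> e0 e1 e2 h1 h2; apply: two0.
have -> : w + w = sa * (t * (sa * u) + s1 * y - s2 * w) - (t * u + y - w).
  have -> : sa * (t * (sa * u) + s1 * y - s2 * w) = t * u * (sa * sa) + y * (sa * s1) - w * (sa * s2) by ring.
  by rewrite e0 e1 e2; ring.
by rewrite h1 h2; ring.
Qed.
Lemma main_gen (N : nat) (Theta a b1 b2 : int -> C)
  (eps eps1 eps2 : C) (c c1 c2 : int) :
  supp_in N Theta -> supp_in N a -> supp_in N b1 -> supp_in N b2 ->
  lstar Theta = Theta ->
  lnonzero Theta -> lnonzero a -> lnonzero b1 -> lnonzero b2 ->
  qtffb N Theta a b1 b2 ->
  (eps = 1 \/ eps = -1) -> (eps1 = 1 \/ eps1 = -1) -> (eps2 = 1 \/ eps2 = -1) ->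
  has_symtype N Theta 1 0 ->
  has_symtype N a eps c -> has_symtype N b1 eps1 c1 -> has_symtype N b2 eps2 c2 ->
  (2 %| c1 + c)%Z /\ (2 %| c2 + c)%Z.
Proof.
move=> sT sa sb1 sb2 _ nT na nb1 nb2 hq he he1 he2 hT ha hb1 hb2.
pose X := fun z => lpeval N Theta (z ^+ 2) * (lpeval N (lstar a) z * lpeval N a (- z)).
pose Y := fun z => lpeval N (lstar b1) z * lpeval N b1 (- z).
pose W := fun z => lpeval N (lstar b2) z * lpeval N b2 (- z).
have gX : good X := good_mul (good_sq (good_lp sT nT)) (good_T sa na).
have gY : good Y := good_T sb1 nb1.
have gW : good W := good_T sb2 nb2.
have E : forall z : C, z != 0 ->
    lpeval N Theta (z ^+ 2) * (lpeval N (lstar a) z * lpeval N a (- z)) + Y z - W z = 0 /\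
    lpeval N Theta (z ^+ 2) * ((-1) ^ c * (lpeval N (lstar a) z * lpeval N a (- z)))
      + (-1) ^ c1 * Y z - (-1) ^ c2 * W z = 0.
  move=> z nz; have [_ h1] := hq z nz; have [_ h2] := hq z^-1 (invr_neq0 nz).
  split; first by move: h1; rewrite /Y /W mulrA.
  rewrite -mulrA (theta_sym hT nz) (Tsym ha he nz) (Tsym hb1 he1 nz) (Tsym hb2 he2 nz) in h2.
  exact h2.
have [ea|ea] := sg_pm c; have [e1|e1] := sg_pm c1; have [e2|e2] := sg_pm c2.
all: have xa := (ea : (-1 : C) ^ c = _).
all: have x1 := (e1 : (-1 : C) ^ c1 = _).
all: have x2 := (e2 : (-1 : C) ^ c2 = _).
all: first [ by split; apply: sg1; rewrite sgD ?ea ?e1 ?e2 ?mulrNN ?mulr1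
  | exfalso; apply: (good_ex gX) => z nz; have [h1 h2] := E z nz; rewrite /X;
    apply: (elimX _ _ _ h1 h2); by rewrite ?xa ?x1 ?x2 ?mulrNN ?mulr1 ?mul1r ?mulN1r
  | exfalso; apply: (good_ex gY) => z nz; have [h1 h2] := E z nz;
    apply: (elimY _ _ _ h1 h2); by rewrite ?xa ?x1 ?x2 ?mulrNN ?mulr1 ?mul1r ?mulN1r
  | exfalso; apply: (good_ex gW) => z nz; have [h1 h2] := E z nz;
    apply: (elimW _ _ _ h1 h2); by rewrite ?xa ?x1 ?x2 ?mulrNN ?mulr1 ?mul1r ?mulN1r ].
Qed.
End Aux.

Theorem theorem4p2 (R : realType) (N : nat) (Theta a b1 b2 : int -> R[i])
  (eps eps1 eps2 : R[i]) (c c1 c2 : int) :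
  supp_in N Theta -> supp_in N a -> supp_in N b1 -> supp_in N b2 ->
  lstar Theta = Theta ->
  lnonzero Theta -> lnonzero a -> lnonzero b1 -> lnonzero b2 ->
  qtffb N Theta a b1 b2 ->
  (eps = 1 \/ eps = -1) -> (eps1 = 1 \/ eps1 = -1) -> (eps2 = 1 \/ eps2 = -1) ->
  has_symtype N Theta 1 0 ->
  has_symtype N a eps c -> has_symtype N b1 eps1 c1 -> has_symtype N b2 eps2 c2 ->
  (2 %| c1 + c)%Z /\ (2 %| c2 + c)%Z.
Proof. exact: main_gen. Qed.
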